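(* Let $G$ and $H$ be graphs such that the direct product $G\times H$ is $1$-perfectly orientable. Then: (1) if one of $G$, $H$ contains an induced $P_3$ or an induced $C_3$, then the other one contains none of the claw $K_{1,3}$, $C_3$, $C_4$, $C_5$, $P_5$ as an induced subgraph; (2) at least one of $G$ and $H$ contains no induced $C_3$ (i.e. is triangle-free); (3) at least one of $G$ and $H$ contains no induced $P_4$.
   Context: All graphs are finite and simple. An orientation of a graph $G$ is $1$-perfect if the out-neighborhood of every vertex induces a clique in $G$; $G$ is $1$-perfectly orientable if it admits a $1$-perfect orientation. The direct product $G\times H$ has vertex set $V(G)\times V(H)$, with $(u,v),(u',v')$ adjacent iff $uu'\in E(G)$ and $vv'\in E(H)$. $P_n$ and $C_n$ denote the path and cycle on $n$ vertices; the claw is $K_{1,3}$. *)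

(* Defs.v *)
From mathcomp Require Import all_boot.
Set Implicit Arguments. Unset Strict Implicit. Unset Printing Implicit Defensive.

Definition simple_graph (T : finType) (e : rel T) : Prop :=
  irreflexive e /\ symmetric e.

Definition dprod_rel (T1 T2 : finType) (g : rel T1) (h : rel T2) : rel (T1 * T2)%type :=
  fun x y => g x.1 y.1 && h x.2 y.2.

Definition orientation (T : finType) (e : rel T) (D : rel T) : Prop :=
  [/\ forall x y, D x y -> e x y,
      forall x y, e x y -> D x y || D y x
    & forall x y, D x y -> ~~ D y x].

Definition one_perfect (T : finType) (e : rel T) (D : rel T) : Prop :=
  forall v x y, D v x -> D v y -> x != y -> e x y.

Definition one_perfectly_orientable (T : finType) (e : rel T) : Prop :=
  exists D : rel T, orientation e D /\ one_perfect e D.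

Definition path_graph (n : nat) : rel 'I_n :=
  fun i j => (i.+1 == j :> nat) || (j.+1 == i :> nat).
Definition cycle_graph (n : nat) : rel 'I_n :=
  fun i j => (i.+1 %% n == j :> nat) || (j.+1 %% n == i :> nat).
Arguments path_graph n : clear implicits.
Arguments cycle_graph n : clear implicits.
Definition claw_graph : rel 'I_4 :=
  fun i j => (i != j) && ((i == 0 :> nat) || (j == 0 :> nat)).

Definition has_induced (T : finType) (e : rel T) (n : nat) (p : rel 'I_n) : Prop :=
  exists f : 'I_n -> T, injective f /\ forall i j, e (f i) (f j) = p i j.

Definition forbidden_five (T : finType) (e : rel T) : Prop :=
  [/\ ~ @has_induced T e 4 claw_graph, ~ @has_induced T e 3 (cycle_graph 3),
      ~ @has_induced T e 4 (cycle_graph 4), ~ @has_induced T e 5 (cycle_graph 5)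
    & ~ @has_induced T e 5 (path_graph 5)].

(* Main.v *)
Require Import Defs.
From mathcomp Require Import all_boot.
Set Implicit Arguments. Unset Strict Implicit. Unset Printing Implicit Defensive.

Definition step (T : finType) (e : rel T) (a b : T * T) : bool :=
  [&& b.2 == a.1, e a.1 b.1, ~~ e a.2 b.1 & b.1 != a.2].

Lemma step_sound (T : finType) (e : rel T) D a b :
  orientation e D -> one_perfect e D -> D a.1 a.2 -> step e a b -> D b.1 b.2.
Proof.
case=> De eD aD op Da /and4P [/eqP -> Eub Nvw Nwv].
case/orP: (eD _ _ Eub) => // Duw.
by move: Nvw; rewrite (op _ _ _ Da Duw) // eq_sym.
Qed.

Lemma path_sound (T : finType) (e : rel T) D a s :
  orientation e D -> one_perfect e D -> D a.1 a.2 -> path (step e) a s ->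
  forall b, b \in s -> D b.1 b.2.
Proof.
move=> O P; elim: s a => [|c s IH] a Da //= /andP [Sac Ps] b.
have Dc := step_sound O P Da Sac.
rewrite inE => /orP [/eqP -> //|]; exact: IH c Dc Ps b.
Qed.

Definition ordk n (k : nat) : 'I_n.+1 := @Ordinal n.+1 (k %% n.+1) (ltn_pmod k (ltn0Sn n)).
Definition V n m (x : nat * nat) : 'I_n.+1 * 'I_m.+1 := (ordk n x.1, ordk m x.2).
Definition VA n m (a : (nat * nat) * (nat * nat)) := (@V n m a.1, @V n m a.2).

Definition cert_ok n m (e : rel ('I_n.+1 * 'I_m.+1)) a s t : bool :=
  let A := VA n m a in let S := map (VA n m) s in let T := map (VA n m) t in
  [&& e A.1 A.2, path (step e) A S, (A.2, A.1) \in S,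
      path (step e) (A.2, A.1) T & A \in T].

Lemma cert_sound n m (e : rel ('I_n.+1 * 'I_m.+1)) a s t :
  cert_ok e a s t -> ~ one_perfectly_orientable e.
Proof.
rewrite /cert_ok /=; set A := VA n m a.
move=> /and5P [EA PS IS PT IT] [D [O P]].
have O' := O; case: O' => _ eD aD.
case/orP: (eD _ _ EA) => HD.
  have := @path_sound _ _ _ A _ O P HD PS _ IS => /= HD'.
  by move: (aD _ _ HD); rewrite HD'.
have := @path_sound _ _ _ (A.2, A.1) _ O P HD PT _ IT => /= HD'.
by move: (aD _ _ HD); rewrite HD'.
Qed.

Lemma transfer (T T' : finType) (e : rel T) (e' : rel T') (F : T' -> T) :
  injective F -> (forall x y, e' x y = e (F x) (F y)) ->
  one_perfectly_orientable e -> one_perfectly_orientable e'.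
Proof.
move=> Fi Fe [D [[De eD aD] P]].
exists (fun x y => D (F x) (F y)); split; first split.
- by move=> x y /De; rewrite Fe.
- by move=> x y; rewrite Fe => /eD.
- by move=> x y /aD.
move=> v x y Dx Dy nxy; rewrite Fe; apply: P Dx Dy _.
by apply: contra nxy => /eqP /Fi ->.
Qed.

Lemma transfer_prod (T1 T2 : finType) (g : rel T1) (h : rel T2) n m
  (p : rel 'I_n) (q : rel 'I_m) :
  has_induced g p -> has_induced h q ->
  one_perfectly_orientable (dprod_rel g h) -> one_perfectly_orientable (dprod_rel p q).
Proof.
move=> [f [fi fe]] [f' [fi' fe']].
apply: (@transfer _ _ _ _ (fun x => (f x.1, f' x.2))).
  by move=> [x1 x2] [y1 y2] /= [/fi -> /fi' ->].
by move=> x y; rewrite /dprod_rel /= fe fe'.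
Qed.

Lemma swap_po (T1 T2 : finType) (g : rel T1) (h : rel T2) :
  one_perfectly_orientable (dprod_rel g h) -> one_perfectly_orientable (dprod_rel h g).
Proof.
apply: (@transfer _ _ _ _ (fun x => (x.2, x.1))).
  by move=> [x1 x2] [y1 y2] /= [-> ->].
by move=> x y; rewrite /dprod_rel /= andbC.
Qed.

Lemma np_P3_claw : ~ one_perfectly_orientable (dprod_rel (path_graph 3) claw_graph).
Proof. apply: (@cert_sound _ _ _ ((0,0),(1,1)) [:: ((1,2),(0,0)); ((2,0),(1,2)); ((1,3),(2,0)); ((0,0),(1,3)); ((1,1),(0,0))] [:: ((2,0),(1,1)); ((1,2),(2,0)); ((0,0),(1,2)); ((1,3),(0,0)); ((2,0),(1,3)); ((1,1),(2,0)); ((0,0),(1,1))]); by vm_compute. Qed.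

Lemma np_P3_C3 : ~ one_perfectly_orientable (dprod_rel (path_graph 3) (cycle_graph 3)).
Proof. apply: (@cert_sound _ _ _ ((0,0),(1,1)) [:: ((1,2),(0,0)); ((0,1),(1,2)); ((1,0),(0,1)); ((2,1),(1,0)); ((1,2),(2,1)); ((0,0),(1,2)); ((1,1),(0,0))] [:: ((0,2),(1,1)); ((1,0),(0,2)); ((2,2),(1,0)); ((1,1),(2,2)); ((0,0),(1,1))]); by vm_compute. Qed.

Lemma np_P3_C4 : ~ one_perfectly_orientable (dprod_rel (path_graph 3) (cycle_graph 4)).
Proof. apply: (@cert_sound _ _ _ ((0,0),(1,1)) [:: ((1,3),(0,0)); ((0,2),(1,3)); ((1,1),(0,2)); ((2,0),(1,1)); ((1,3),(2,0)); ((0,0),(1,3)); ((1,1),(0,0))] [:: ((0,2),(1,1)); ((1,3),(0,2)); ((2,0),(1,3)); ((1,1),(2,0)); ((0,0),(1,1))]); by vm_compute. Qed.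

Lemma np_P3_C5 : ~ one_perfectly_orientable (dprod_rel (path_graph 3) (cycle_graph 5)).
Proof. apply: (@cert_sound _ _ _ ((0,0),(1,1)) [:: ((1,4),(0,0)); ((0,3),(1,4)); ((1,2),(0,3)); ((2,3),(1,2)); ((1,4),(2,3)); ((0,0),(1,4)); ((1,1),(0,0))] [:: ((0,2),(1,1)); ((1,3),(0,2)); ((2,2),(1,3)); ((1,1),(2,2)); ((0,0),(1,1))]); by vm_compute. Qed.

Lemma np_P3_P5 : ~ one_perfectly_orientable (dprod_rel (path_graph 3) (path_graph 5)).
Proof. apply: (@cert_sound _ _ _ ((0,1),(1,0)) [:: ((1,2),(0,1)); ((0,3),(1,2)); ((1,4),(0,3)); ((2,3),(1,4)); ((1,2),(2,3)); ((0,1),(1,2)); ((1,0),(0,1))] [:: ((2,1),(1,0)); ((1,2),(2,1)); ((0,3),(1,2)); ((1,4),(0,3)); ((2,3),(1,4)); ((1,2),(2,3)); ((2,1),(1,2)); ((1,0),(2,1)); ((0,1),(1,0))]); by vm_compute. Qed.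

Lemma np_C3_claw : ~ one_perfectly_orientable (dprod_rel (cycle_graph 3) claw_graph).
Proof. apply: (@cert_sound _ _ _ ((0,0),(1,1)) [:: ((1,2),(0,0)); ((2,0),(1,2)); ((1,3),(2,0)); ((0,0),(1,3)); ((1,1),(0,0))] [:: ((2,0),(1,1)); ((0,1),(2,0)); ((1,0),(0,1)); ((0,2),(1,0)); ((2,0),(0,2)); ((1,1),(2,0)); ((0,0),(1,1))]); by vm_compute. Qed.

Lemma np_C3_C3 : ~ one_perfectly_orientable (dprod_rel (cycle_graph 3) (cycle_graph 3)).
Proof. apply: (@cert_sound _ _ _ ((0,0),(1,1)) [:: ((1,2),(0,0)); ((0,1),(1,2)); ((1,0),(0,1)); ((2,1),(1,0)); ((0,0),(2,1)); ((1,1),(0,0))] [:: ((0,2),(1,1)); ((1,0),(0,2)); ((0,1),(1,0)); ((2,0),(0,1)); ((1,1),(2,0)); ((0,0),(1,1))]); by vm_compute. Qed.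

Lemma np_C3_C4 : ~ one_perfectly_orientable (dprod_rel (cycle_graph 3) (cycle_graph 4)).
Proof. apply: (@cert_sound _ _ _ ((0,0),(1,1)) [:: ((1,3),(0,0)); ((0,2),(1,3)); ((2,1),(0,2)); ((0,0),(2,1)); ((1,1),(0,0))] [:: ((0,2),(1,1)); ((1,3),(0,2)); ((2,0),(1,3)); ((1,1),(2,0)); ((0,0),(1,1))]); by vm_compute. Qed.

Lemma np_C3_C5 : ~ one_perfectly_orientable (dprod_rel (cycle_graph 3) (cycle_graph 5)).
Proof. apply: (@cert_sound _ _ _ ((0,0),(1,1)) [:: ((1,4),(0,0)); ((0,3),(1,4)); ((2,4),(0,3)); ((0,0),(2,4)); ((1,1),(0,0))] [:: ((0,2),(1,1)); ((1,3),(0,2)); ((2,2),(1,3)); ((1,1),(2,2)); ((0,0),(1,1))]); by vm_compute. Qed.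

Lemma np_C3_P5 : ~ one_perfectly_orientable (dprod_rel (cycle_graph 3) (path_graph 5)).
Proof. apply: (@cert_sound _ _ _ ((0,1),(1,2)) [:: ((2,0),(0,1)); ((1,1),(2,0)); ((2,2),(1,1)); ((0,1),(2,2)); ((1,2),(0,1))] [:: ((0,3),(1,2)); ((1,4),(0,3)); ((2,3),(1,4)); ((1,2),(2,3)); ((0,1),(1,2))]); by vm_compute. Qed.

Lemma np_P4_P4 : ~ one_perfectly_orientable (dprod_rel (path_graph 4) (path_graph 4)).
Proof. apply: (@cert_sound _ _ _ ((0,1),(1,0)) [:: ((1,2),(0,1)); ((2,1),(1,2)); ((3,2),(2,1)); ((2,3),(3,2)); ((1,2),(2,3)); ((0,1),(1,2)); ((1,0),(0,1))] [:: ((2,1),(1,0)); ((1,2),(2,1)); ((2,3),(1,2)); ((3,2),(2,3)); ((2,1),(3,2)); ((1,0),(2,1)); ((0,1),(1,0))]); by vm_compute. Qed.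

From Stdlib Require Import Classical.

Lemma key (T1 T2 : finType) (g : rel T1) (h : rel T2) n m
  (p : rel 'I_n) (q : rel 'I_m) :
  has_induced g p -> has_induced h q -> ~ one_perfectly_orientable (dprod_rel p q) ->
  ~ one_perfectly_orientable (dprod_rel g h).
Proof. by move=> Hg Hh N Po; apply: N; exact: transfer_prod Hg Hh Po. Qed.

Lemma nsw (T1 T2 : finType) (g : rel T1) (h : rel T2) :
  ~ one_perfectly_orientable (dprod_rel g h) -> ~ one_perfectly_orientable (dprod_rel h g).
Proof. by move=> N /swap_po. Qed.

Theorem lemma9 (T1 T2 : finType) (g : rel T1) (h : rel T2) :
  simple_graph g -> simple_graph h ->
  one_perfectly_orientable (dprod_rel g h) ->
  [/\ (@has_induced _ g 3 (path_graph 3) \/ @has_induced _ g 3 (cycle_graph 3) -> forbidden_five h)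
      /\ (@has_induced _ h 3 (path_graph 3) \/ @has_induced _ h 3 (cycle_graph 3) -> forbidden_five g),
      ~ @has_induced _ g 3 (cycle_graph 3) \/ ~ @has_induced _ h 3 (cycle_graph 3)
    & ~ @has_induced _ g 4 (path_graph 4) \/ ~ @has_induced _ h 4 (path_graph 4)].
Proof.
move=> _ _ Po; split; first split.
- case=> Hg; split=> Hh; apply: (key Hg Hh _ Po);
  first [exact: np_P3_claw | exact: np_P3_C3 | exact: np_P3_C4 | exact: np_P3_C5
    | exact: np_P3_P5 | exact: np_C3_claw | exact: np_C3_C3 | exact: np_C3_C4
    | exact: np_C3_C5 | exact: np_C3_P5].
- case=> Hh; split=> Hg; apply: (key Hg Hh _ Po); apply: nsw;
  first [exact: np_P3_claw | exact: np_P3_C3 | exact: np_P3_C4 | exact: np_P3_C5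
    | exact: np_P3_P5 | exact: np_C3_claw | exact: np_C3_C3 | exact: np_C3_C4
    | exact: np_C3_C5 | exact: np_C3_P5].
- case: (classic (@has_induced _ g 3 (cycle_graph 3))) => Hg; last by left.
  by right=> Hh; exact: (key Hg Hh np_C3_C3 Po).
- case: (classic (@has_induced _ g 4 (path_graph 4))) => Hg; last by left.
  by right=> Hh; exact: (key Hg Hh np_P4_P4 Po).
Qed.
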